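(* Let $(X,r)$ be a non-degenerate involutive set-theoretic solution of the Yang–Baxter equation with $|X|=n$, identified with $\{1,\dots,n\}$, and let $(\mathcal{X}^2,\tilde r)$ be the induced pair. Then, for every natural number $k\ge 1$, there exists a non-degenerate involutive set-theoretic solution of size $n^{2^k}$ induced from $(X,r)$, namely the one obtained by applying the construction $(X,r)\mapsto(\mathcal{X}^2,\tilde r)$ iteratively $k$ times. Furthermore: (i) if $(X,r)$ is irretractable, resp. a multipermutation solution of level $\ell$, then $(\mathcal{X}^2,\tilde r)$ is irretractable, resp. a multipermutation solution of level $\ell$; (ii) if $(X,r)$ is decomposable, then $(\mathcal{X}^2,\tilde r)$ is decomposable; (iii) if $(X,r)$ is of class $m$, then $(\mathcal{X}^2,\tilde r)$ is of class $m$. Assume moreover that $(X,r)$ is indecomposable and satisfies condition $(\mathfrak{C})$: there exists a natural number $\ell$ such that for every $1\le s\le n$ there exist $1\le i_1,\dots,i_\ell\le n$ with $\sigma_{i_1}\sigma_{i_2}\cdots\sigma_{i_\ell}(1)=s$. Then $(\mathcal{X}^2,\tilde r)$ is also indecomposable and satisfies condition $(\mathfrak{C})$ (with respect to its own permutations $g_i^k$ and the element $T_1^1$ in place of $1$). Moreover, the process can be repeated iteratively to obtain indecomposable solutions of size $n^{2^k}$ for every natural number $k\ge1$.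
   Context: A set-theoretic solution of the Yang–Baxter equation is a pair $(X,r)$ with $X$ a set and $r:X\times X\to X\times X$, written $r(x,y)=(\sigma_x(y),\gamma_y(x))$, such that $r^{12}r^{23}r^{12}=r^{23}r^{12}r^{23}$ on $X^3$, where $r^{12}=r\times \mathrm{Id}_X$, $r^{23}=\mathrm{Id}_X\times r$. It is non-degenerate if all $\sigma_x,\gamma_x$ are bijections of $X$, and involutive if $r\circ r=\mathrm{Id}_{X\times X}$. For $|X|=n$ we identify $X$ with $\{1,\dots,n\}$, so the $\sigma_i,\gamma_j$ are permutations of $\{1,\dots,n\}$. Induced pair: $\mathcal{X}^2=\{T_i^k: 1\le i,k\le n\}$ is a set of $n^2$ symbols in bijection with $X\times X$, and $\tilde r:\mathcal{X}^2\times\mathcal{X}^2\to\mathcal{X}^2\times\mathcal{X}^2$ is $\tilde r(T_i^k,T_j^l)=(T_{\sigma_i(j)}^{\sigma_k(l)},T_{\gamma_j(i)}^{\gamma_l(k)})$; we write $g_i^k(T_j^l)=T_{\sigma_i(j)}^{\sigma_k(l)}$ and $f_j^l(T_i^k)=T_{\gamma_j(i)}^{\gamma_l(k)}$, so $\tilde r(T_i^k,T_j^l)=(g_i^k(T_j^l),f_j^l(T_i^k))$. A subset $Y\subseteq X$ is invariant if $r(Y\times Y)\subseteq Y\times Y$, and non-degenerate invariant if moreover $(Y,r|_{Y^2})$ is a non-degenerate involutive solution; $(X,r)$ is decomposable if $X$ is the union of two non-empty disjoint non-degenerate invariant subsets, and indecomposable otherwise. Retraction: $x\sim y$ iff $\sigma_x=\sigma_y$;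 $\mathrm{Ret}(X,r)=(X/\!\sim, r')$ with $r'([x],[y])=([\sigma_x(y)],[\gamma_y(x)])$, and $\mathrm{Ret}^k=\mathrm{Ret}(\mathrm{Ret}^{k-1})$. $(X,r)$ is a multipermutation solution of level $\ell$ if $\ell$ is the smallest natural number with $|\mathrm{Ret}^\ell(X,r)|=1$; if such $\ell$ exists $(X,r)$ is retractable, otherwise irretractable. Class: with $D(x)=\sigma_x^{-1}(x)$, $(X,r)$ is of class $m$ if $m$ is the minimal natural number such that $\sigma_x\sigma_{D(x)}\sigma_{D^2(x)}\cdots\sigma_{D^{m-1}(x)}=\mathrm{Id}_X$ for every $x\in X$. *)

(* Defs.v *)
From HB Require Import structures.
From mathcomp Require Import all_boot.
Unset Printing Implicit Defensive.

Definition sol := {T : finType & (T * T -> T * T)%type}.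
Definition carrier (S : sol) : finType := projT1 S.
Definition rmap (S : sol) : carrier S * carrier S -> carrier S * carrier S := projT2 S.

(* r(x,y) = (sigma_x(y), gamma_y(x)) *)
Definition sig_ (S : sol) (x y : carrier S) : carrier S := (rmap S (x, y)).1.
Definition gam (S : sol) (y x : carrier S) : carrier S := (rmap S (x, y)).2.

(* r^{12} = r x Id and r^{23} = Id x r on X^3, triples written (x,y,z) = ((x,y),z) *)
Definition r12 (T : Type) (r : T * T -> T * T) (t : T * T * T) : T * T * T :=
  let: (x, y, z) := t in let: (a, b) := r (x, y) in (a, b, z).
Definition r23 (T : Type) (r : T * T -> T * T) (t : T * T * T) : T * T * T :=
  let: (x, y, z) := t in let: (b, c) := r (y, z) in (x, b, c).

Definition is_YBE (S : sol) : Prop :=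
  forall t, r12 _ (rmap S) (r23 _ (rmap S) (r12 _ (rmap S) t))
          = r23 _ (rmap S) (r12 _ (rmap S) (r23 _ (rmap S) t)).
Definition nondeg (S : sol) : Prop :=
  forall x, bijective (sig_ S x) /\ bijective (gam S x).
Definition involutive (S : sol) : Prop := forall p, rmap S (rmap S p) = p.

Definition nd_inv_sol (S : sol) : Prop := [/\ is_YBE S, nondeg S & involutive S].

(* the solution (X, r) with X = {0,...,n-1} (= {1,...,n} shifted) *)
Definition sol_of (n : nat) (r : 'I_n * 'I_n -> 'I_n * 'I_n) : sol :=
  existT (fun T : finType => (T * T -> T * T)%type) ('I_n : finType) r.

(* Induced pair: T_i^k <-> (i,k);
   r~(T_i^k, T_j^l) = (T_{sigma_i(j)}^{sigma_k(l)}, T_{gamma_j(i)}^{gamma_l(k)}) *)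
Definition induced_map (S : sol) (p : (carrier S * carrier S) * (carrier S * carrier S))
  : (carrier S * carrier S) * (carrier S * carrier S) :=
  let: ((i, k), (j, l)) := p in
  ((sig_ S i j, sig_ S k l), (gam S j i, gam S l k)).
Definition induced (S : sol) : sol :=
  existT (fun T : finType => (T * T -> T * T)%type)
    ((carrier S * carrier S)%type : finType) (induced_map S).

(* Retraction: x ~ y iff sigma_x = sigma_y; Ret(X,r) = (X/~, r') *)
Definition cls (S : sol) (x : carrier S) : {set carrier S} :=
  [set y | [forall z, sig_ S y z == sig_ S x z]].
Definition is_cls (S : sol) (A : {set carrier S}) : bool := [exists x, A == cls S x].
Definition ret_carrier (S : sol) := {A : {set carrier S} | is_cls S A}.
Definition to_ret (S : sol) (x : carrier S) : ret_carrier S :=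
  exist _ (cls S x) (introT existsP (ex_intro _ x (eqxx (cls S x)))).
Definition rep (S : sol) (A : ret_carrier S) : carrier S :=
  xchoose (elimT existsP (valP A)).
Definition ret_map (S : sol) (p : ret_carrier S * ret_carrier S)
  : ret_carrier S * ret_carrier S :=
  let: (A, B) := p in
  (to_ret S (sig_ S (rep S A) (rep S B)), to_ret S (gam S (rep S B) (rep S A))).
Definition ret (S : sol) : sol :=
  existT (fun T : finType => (T * T -> T * T)%type)
    (ret_carrier S : finType) (ret_map S).

Definition mp_level (S : sol) (l : nat) : Prop :=
  #|carrier (iter l ret S)| = 1 /\ (forall l', l' < l -> #|carrier (iter l' ret S)| <> 1).
Definition irretractable (S : sol) : Prop :=
  forall l, #|carrier (iter l ret S)| <> 1.

(* Class: D(x) = sigma_x^{-1}(x) *)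
Definition Dmap (S : sol) (x : carrier S) : carrier S :=
  odflt x [pick y | sig_ S x y == x].
(* sigma_x o sigma_{D x} o ... o sigma_{D^{m-1} x} *)
Definition sig_chain (S : sol) (x : carrier S) (m : nat) : carrier S -> carrier S :=
  foldr (fun i f => sig_ S (iter i (Dmap S) x) \o f) id (iota 0 m).
Definition class_eq (S : sol) (m : nat) : Prop :=
  forall x y, sig_chain S x m y = y.
Definition is_class (S : sol) (m : nat) : Prop :=
  [/\ 0 < m, class_eq S m & forall m', 0 < m' -> m' < m -> ~ class_eq S m'].

Definition invariant (S : sol) (Y : {set carrier S}) : Prop :=
  forall x y, x \in Y -> y \in Y ->
    (rmap S (x, y)).1 \in Y /\ (rmap S (x, y)).2 \in Y.
Definition restrict_map (S : sol) (Y : {set carrier S})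
  (p : {x : carrier S | x \in Y} * {x : carrier S | x \in Y})
  : {x : carrier S | x \in Y} * {x : carrier S | x \in Y} :=
  let: (a, b) := p in
  let q := rmap S (val a, val b) in (insubd a q.1, insubd b q.2).
Definition restrict (S : sol) (Y : {set carrier S}) : sol :=
  existT (fun T : finType => (T * T -> T * T)%type)
    ({x : carrier S | x \in Y} : finType) (restrict_map S Y).
Definition nd_invariant (S : sol) (Y : {set carrier S}) : Prop :=
  invariant S Y /\ nd_inv_sol (restrict S Y).
Definition decomposable (S : sol) : Prop :=
  exists Y Z : {set carrier S},
    [/\ Y != set0, Z != set0, [disjoint Y & Z], Y :|: Z = setT
      & nd_invariant S Y /\ nd_invariant S Z].
Definition indecomposable (S : sol) : Prop := ~ decomposable S.

Definition condC (S : sol) (e : carrier S) : Prop :=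
  exists l, forall s : carrier S, exists ids : seq (carrier S),
    size ids = l /\ foldr (fun i y => sig_ S i y) e ids = s.

(* Main.v *)
Require Import Defs.
From mathcomp Require Import all_boot all_fingroup.
Set Implicit Arguments. Unset Strict Implicit.

Lemma rmapE (S : sol) x y : rmap S (x, y) = (sig_ S x y, gam S y x).
Proof. by rewrite /sig_ /gam; case: (rmap S (x, y)). Qed.

Lemma r12E (S : sol) x y z :
  r12 _ (rmap S) (x, y, z) = (sig_ S x y, gam S y x, z).
Proof. by rewrite /r12 rmapE. Qed.
Lemma r23E (S : sol) x y z :
  r23 _ (rmap S) (x, y, z) = (x, sig_ S y z, gam S z y).
Proof. by rewrite /r23 rmapE. Qed.

Definition ybe_comp (S : sol) : Prop := forall x y z,
  [/\ sig_ S (sig_ S x y) (sig_ S (gam S y x) z) = sig_ S x (sig_ S y z),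
      gam S (sig_ S (gam S y x) z) (sig_ S x y) = sig_ S (gam S (sig_ S y z) x) (gam S z y)
    & gam S z (gam S y x) = gam S (gam S z y) (gam S (sig_ S y z) x)].

Lemma ybeP (S : sol) : is_YBE S <-> ybe_comp S.
Proof.
split.
- move=> H x y z; have := H (x, y, z).
  rewrite r12E r23E r12E r23E r12E r23E. by case.
- move=> H [[x y] z]; rewrite r12E r23E r12E r23E r12E r23E.
  by case: (H x y z) => -> -> ->.
Qed.

Definition inv_comp (S : sol) : Prop := forall x y,
  sig_ S (sig_ S x y) (gam S y x) = x /\ gam S (gam S y x) (sig_ S x y) = y.

Lemma invP (S : sol) : Defs.involutive S <-> inv_comp S.
Proof.
split.
- move=> H x y; have := H (x, y); rewrite rmapE rmapE; by case.
- move=> H [x y]; rewrite rmapE rmapE; by case: (H x y) => -> ->.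
Qed.

Definition inv_of (T : finType) (f : T -> T) (y : T) : T := odflt y [pick z | f z == y].

Lemma inv_ofK (T : finType) (f : T -> T) : bijective f -> cancel (inv_of f) f.
Proof.
move=> [g fg gf] y; rewrite /inv_of; case: pickP => [z /eqP //|].
by move/(_ (g y)); rewrite gf eqxx.
Qed.
Lemma inv_ofKV (T : finType) (f : T -> T) : bijective f -> cancel f (inv_of f).
Proof.
move=> bf x; apply: (bij_inj bf); by rewrite inv_ofK.
Qed.

Lemma surjF_bij (T : finType) (f : T -> T) : (forall y, exists x, f x = y) -> bijective f.
Proof.
move=> fs.
have fs' : forall y, exists x, f x == y by move=> y; case: (fs y) => x <-; exists x.
pose g y := xchoose (fs' y).
have gK : cancel g f by move=> y; apply/eqP; exact: xchooseP (fs' y).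
have bg : bijective g by apply: injF_bij; exact: can_inj gK.
exists g => //; exact/(bij_can_sym bg).
Qed.

Definition hom (A B : sol) (f : carrier A -> carrier B) : Prop := forall x y,
  f (sig_ A x y) = sig_ B (f x) (f y) /\ f (gam A y x) = gam B (f y) (f x).

Lemma hom_inj_nd (A B : sol) (f : carrier A -> carrier B) :
  injective f -> hom f -> nd_inv_sol B -> nd_inv_sol A.
Proof.
move=> fi hf [yb nb ib].
have h1 : forall a b, f (sig_ A a b) = sig_ B (f a) (f b) by move=> a b; case: (hf a b).
have h2 : forall a b, f (gam A b a) = gam B (f b) (f a) by move=> a b; case: (hf a b).
move/ybeP: yb => yb; move/invP: ib => ib.
split.
- apply/ybeP => x y z; case: (yb (f x) (f y) (f z)) => e1 e2 e3.
  by split; apply: fi; rewrite ?h1 ?h2 ?h1 ?h2 ?h1 ?h2 ?h1 ?h2.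
- move=> x; split; apply: injF_bij => a b e.
  + apply: fi; apply: (bij_inj (nb (f x)).1); by rewrite -!h1 e.
  + apply: fi; apply: (bij_inj (nb (f x)).2); by rewrite -!h2 e.
- apply/invP => x y; case: (ib (f x) (f y)) => e1 e2.
  by split; apply: fi; rewrite ?h1 ?h2 ?h1 ?h2.
Qed.

Lemma hom_surj_nd (A B : sol) (f : carrier A -> carrier B) :
  (forall b, exists a, f a = b) -> hom f -> nd_inv_sol A -> nd_inv_sol B.
Proof.
move=> fs hf [ya na ia].
have h1 : forall a b, f (sig_ A a b) = sig_ B (f a) (f b) by move=> a b; case: (hf a b).
have h2 : forall a b, f (gam A b a) = gam B (f b) (f a) by move=> a b; case: (hf a b).
move/ybeP: ya => ya; move/invP: ia => ia.
split.
- apply/ybeP => x y z.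
  case: (fs x) => a <-; case: (fs y) => b <-; case: (fs z) => c <-.
  case: (ya a b c) => e1 e2 e3.
  by split; rewrite -?h1 -?h2 -?h1 -?h2 -?h1 -?h2 ?e1 ?e2 ?e3.
- move=> x; case: (fs x) => a <-; split; apply: surjF_bij => y; case: (fs y) => c <-.
  + exists (f (inv_of (sig_ A a) c)); by rewrite -h1 inv_ofK //; case: (na a).
  + exists (f (inv_of (gam A a) c)); by rewrite -h2 inv_ofK //; case: (na a).
- apply/invP => x y; case: (fs x) => a <-; case: (fs y) => b <-.
  case: (ia a b) => e1 e2.
  by split; rewrite -?h1 -?h2 -?h1 -?h2 ?e1 ?e2.
Qed.

Lemma sig_ind (S : sol) (i k j l : carrier S) :
  sig_ (induced S) ((i, k) : carrier (induced S)) (j, l) = (sig_ S i j, sig_ S k l).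
Proof. by []. Qed.
Lemma gam_ind (S : sol) (i k j l : carrier S) :
  gam (induced S) ((j, l) : carrier (induced S)) (i, k) = (gam S j i, gam S l k).
Proof. by []. Qed.

Lemma induced_nd (S : sol) : nd_inv_sol S -> nd_inv_sol (induced S).
Proof.
move=> [ys ns is_]; move/ybeP: ys => ys; move/invP: is_ => is_.
split.
- apply/ybeP => [[x1 x2] [y1 y2] [z1 z2]].
  case: (ys x1 y1 z1) => e1 e2 e3; case: (ys x2 y2 z2) => f1 f2 f3.
  rewrite /sig_ /gam /=; by rewrite e1 e2 e3 f1 f2 f3.
- move=> [x1 x2]; case: (ns x1) => b1 c1; case: (ns x2) => b2 c2; split.
  + exists (fun p : carrier S * carrier S => (inv_of (sig_ S x1) p.1, inv_of (sig_ S x2) p.2)).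
    * by move=> [a b]; rewrite sig_ind /= !inv_ofKV.
    * by move=> [a b]; rewrite /= sig_ind !inv_ofK.
  + exists (fun p : carrier S * carrier S => (inv_of (gam S x1) p.1, inv_of (gam S x2) p.2)).
    * by move=> [a b]; rewrite gam_ind /= !inv_ofKV.
    * by move=> [a b]; rewrite /= gam_ind !inv_ofK.
- apply/invP => [[x1 x2] [y1 y2]].
  case: (is_ x1 y1) => e1 e2; case: (is_ x2 y2) => f1 f2.
  rewrite /sig_ /gam /=; by rewrite e1 e2 f1 f2.
Qed.

Lemma card_induced (S : sol) : #|carrier (induced S)| = #|carrier S| ^ 2.
Proof. by rewrite /= card_prod expnS expn1. Qed.

Lemma iter_induced_nd (S : sol) k : nd_inv_sol S -> nd_inv_sol (iter k induced S).
Proof. by move=> H; elim: k => //= k IH; apply: induced_nd. Qed.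

Definition eqs (S : sol) (a b : carrier S) : Prop := forall z, sig_ S a z = sig_ S b z.

Lemma inv_of_ext (T : finType) (f g : T -> T) : f =1 g -> inv_of f =1 inv_of g.
Proof. by move=> fg t; rewrite /inv_of; congr odflt; apply: eq_pick => z; rewrite fg. Qed.

Lemma inv_pres (T : finType) (p q : T -> T) (R : T -> T -> Prop) :
  cancel p q -> cancel q p -> (forall a b, R a b -> R (p a) (p b)) ->
  forall a b, R a b -> R (q a) (q b).
Proof.
move=> pK qK Rp.
pose P := perm (can_inj pK).
have qE : forall a, q a = iter #[P]%g.-1 p a.
  move=> a; have -> : q a = (P^-1)%g a.
    by apply: (@perm_inj _ P); rewrite permKV permE qK.
  by rewrite invg_expg permX; apply: eq_iter => c; rewrite permE.
move=> a b Rab; rewrite !qE; elim: #[P]%g.-1 => //= k IH; exact: Rp.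
Qed.

Lemma EqA (S : sol) : nd_inv_sol S -> forall x u w,
  sig_ S u (sig_ S (inv_of (sig_ S u) x) w) = sig_ S x (sig_ S (inv_of (sig_ S x) u) w).
Proof.
move=> [ys ns is_] x u w; move/ybeP: ys => ys; move/invP: is_ => is_.
set y := inv_of (sig_ S x) u.
have xy : sig_ S x y = u by rewrite /y inv_ofK //; case: (ns x).
have gy : gam S y x = inv_of (sig_ S u) x.
  case: (is_ x y) => e _; rewrite xy in e.
  apply: (bij_inj (ns u).1); rewrite e inv_ofK //; by case: (ns u).
case: (ys x y w) => e _ _; by rewrite -gy -xy.
Qed.

Lemma gamE (S : sol) : nd_inv_sol S -> forall x y,
  gam S y x = inv_of (sig_ S (sig_ S x y)) x.
Proof.
move=> [_ ns is_] x y; move/invP: is_ => is_.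
case: (is_ x y) => e _; apply: (bij_inj (ns (sig_ S x y)).1).
rewrite e inv_ofK //; by case: (ns (sig_ S x y)).
Qed.

Lemma W2a (S : sol) : nd_inv_sol S -> forall u x x', eqs x x' ->
  eqs (inv_of (sig_ S u) x) (inv_of (sig_ S u) x').
Proof.
move=> H u x x' e w; have ns := H.
case: ns => _ ns _.
apply: (bij_inj (ns u).1).
rewrite (EqA H x) (EqA H x') e.
by rewrite (inv_of_ext e).
Qed.

Lemma W1 (S : sol) : nd_inv_sol S -> forall x y y', eqs y y' ->
  eqs (sig_ S x y) (sig_ S x y').
Proof.
move=> H x; have [_ ns _] := H.
apply: (@inv_pres _ (inv_of (sig_ S x)) (sig_ S x) (@eqs S)).
- by apply: inv_ofK; case: (ns x).
- by apply: inv_ofKV; case: (ns x).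
- by move=> a b; apply: W2a.
Qed.

Lemma wd_sig (S : sol) : nd_inv_sol S -> forall x x' y y', eqs x x' -> eqs y y' ->
  eqs (sig_ S x y) (sig_ S x' y').
Proof. by move=> H x x' y y' ex ey z; rewrite -ex; apply: W1. Qed.

Lemma wd_gam (S : sol) : nd_inv_sol S -> forall x x' y y', eqs x x' -> eqs y y' ->
  eqs (gam S y x) (gam S y' x').
Proof.
move=> H x x' y y' ex ey z.
rewrite !(gamE H) -(inv_of_ext (wd_sig H ex ey)).
exact: W2a.
Qed.

Lemma cls_eq (S : sol) x y : cls S x = cls S y <-> eqs x y.
Proof.
split.
- move=> e z; have : x \in cls S x by rewrite inE; apply/forallP.
  by rewrite e inE => /forallP /(_ z) /eqP.
- move=> e; apply/setP => z; rewrite !inE; apply: eq_forallb => w; by rewrite e.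
Qed.

Lemma to_ret_eq (S : sol) x y : to_ret S x = to_ret S y <-> eqs x y.
Proof.
split.
- by move/(congr1 val) => /= /cls_eq.
- by move=> e; apply: val_inj => /=; apply/cls_eq.
Qed.

Lemma rep_val (S : sol) (A : ret_carrier S) : val A = cls S (rep S A).
Proof. by apply/eqP; rewrite /rep; apply: (xchooseP (elimT existsP (valP A))). Qed.

Lemma to_ret_rep (S : sol) (A : ret_carrier S) : to_ret S (rep S A) = A.
Proof. by apply: val_inj => /=; rewrite rep_val. Qed.

Lemma rep_eqs (S : sol) x : eqs x (rep S (to_ret S x)).
Proof. by apply/cls_eq; rewrite -rep_val. Qed.

Lemma sig_ret (S : sol) (A B : ret_carrier S) :
  sig_ (ret S) A B = to_ret S (sig_ S (rep S A) (rep S B)).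
Proof. by []. Qed.
Lemma gam_ret (S : sol) (A B : ret_carrier S) :
  gam (ret S) B A = to_ret S (gam S (rep S B) (rep S A)).
Proof. by []. Qed.

Lemma to_ret_hom (S : sol) : nd_inv_sol S -> @hom S (ret S) (to_ret S).
Proof.
move=> H x y; split.
- rewrite sig_ret; apply/to_ret_eq; apply: wd_sig => //; exact: rep_eqs.
- rewrite gam_ret; apply/to_ret_eq; apply: wd_gam => //; exact: rep_eqs.
Qed.

Lemma to_ret_surj (S : sol) (A : ret_carrier S) : exists x, to_ret S x = A.
Proof. by exists (rep S A); apply: to_ret_rep. Qed.

Lemma ret_nd (S : sol) : nd_inv_sol S -> nd_inv_sol (ret S).
Proof.
move=> H; apply: (@hom_surj_nd S (ret S) (to_ret S)) => //; [exact: to_ret_surj | exact: to_ret_hom].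
Qed.

Lemma iter_ret_nd (S : sol) l : nd_inv_sol S -> nd_inv_sol (iter l ret S).
Proof. by move=> H; elim: l => //= l IH; apply: ret_nd. Qed.

Definition iso (A B : sol) : Prop :=
  exists f : carrier A -> carrier B, bijective f /\ hom f.

Lemma iso_refl (A : sol) : iso A A.
Proof. by exists id; split; [exists id | move=> x y]. Qed.

Lemma iso_trans (A B C : sol) : iso A B -> iso B C -> iso A C.
Proof.
move=> [f [bf hf]] [g [bg hg]]; exists (g \o f); split; first exact: bij_comp.
move=> x y /=; case: (hf x y) => -> ->; exact: hg.
Qed.

Lemma iso_card (A B : sol) : iso A B -> #|carrier A| = #|carrier B|.
Proof. by move=> [f [bf _]]; apply: bij_eq_card bf. Qed.

Lemma kernel_iso (S A B : sol) (f : carrier S -> carrier A) (g : carrier S -> carrier B) :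
  (forall a, exists x, f x = a) -> (forall b, exists x, g x = b) ->
  hom f -> hom g -> (forall x y, f x = f y <-> g x = g y) -> iso A B.
Proof.
move=> fs gs hf hg k.
have fs' : forall a, exists x, f x == a by move=> a; case: (fs a) => x <-; exists x.
have gs' : forall b, exists x, g x == b by move=> b; case: (gs b) => x <-; exists x.
pose hA a := xchoose (fs' a); pose hB b := xchoose (gs' b).
have hAK : forall a, f (hA a) = a by move=> a; apply/eqP; exact: (xchooseP (fs' a)).
have hBK : forall b, g (hB b) = b by move=> b; apply/eqP; exact: (xchooseP (gs' b)).
pose F a := g (hA a); pose G b := f (hB b).
have Ff : forall x, F (f x) = g x by move=> x; apply/k; rewrite hAK.
have Gg : forall x, G (g x) = f x by move=> x; apply/k; rewrite hBK.
exists F; split.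
- exists G => a; [by rewrite /F Gg hAK | by rewrite /G Ff hBK].
- move=> a b; rewrite -(hAK a) -(hAK b).
  case: (hf (hA a) (hA b)) => <- <-; rewrite !Ff; exact: hg.
Qed.

Lemma ret_iso (A B : sol) : nd_inv_sol B -> iso A B -> iso (ret A) (ret B).
Proof.
move=> HB [f [bf hf]].
have HA : nd_inv_sol A by apply: (hom_inj_nd (bij_inj bf) hf HB).
have h1 : forall a b, f (sig_ A a b) = sig_ B (f a) (f b) by move=> a b; case: (hf a b).
apply: (@kernel_iso A (ret A) (ret B) (to_ret A) (fun x => to_ret B (f x))).
- exact: to_ret_surj.
- move=> b; case: (to_ret_surj b) => y <-; case: bf => g fg gf.
  by exists (g y); rewrite gf.
- exact: to_ret_hom.
- move=> x y; case: (to_ret_hom HB (f x) (f y)) => e1 e2.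
  case: (hf x y) => -> ->; by rewrite e1 e2.
- move=> x y; split.
  + move/to_ret_eq => e; apply/to_ret_eq => z; case: bf => g fg gf; rewrite -(gf z) -!h1; by rewrite e.
  + move/to_ret_eq => e; apply/to_ret_eq => z; apply: (bij_inj bf); by rewrite !h1 e.
Qed.

Lemma ret_prod (R : sol) : nd_inv_sol R -> iso (ret (induced R)) (induced (ret R)).
Proof.
move=> H; have HI := induced_nd H.
pose g (p : carrier (induced R)) : carrier (induced (ret R)) := (to_ret R p.1, to_ret R p.2).
apply: (@kernel_iso (induced R) (ret (induced R)) (induced (ret R)) (to_ret (induced R)) g).
- exact: to_ret_surj.
- move=> [a b]; case: (to_ret_surj a) => x <-; case: (to_ret_surj b) => y <-.
  by exists (x, y).
- exact: to_ret_hom.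
- move=> [x1 x2] [y1 y2].
  case: (to_ret_hom H x1 y1) => a1 b1; case: (to_ret_hom H x2 y2) => a2 b2.
  rewrite /g /=; split.
  + by rewrite sig_ind /= a1 a2.
  + by rewrite gam_ind /= b1 b2.
- move=> [x1 x2] [y1 y2]; rewrite /g /=; split.
  + move=> E; have e := proj1 (@to_ret_eq (induced R) (x1, x2) (y1, y2)) E; have e1 : eqs x1 y1.
      by move=> z; have := e (z, x2); rewrite !sig_ind => -[].
    have e2 : eqs x2 y2.
      by move=> z; have := e (x1, z); rewrite !sig_ind => -[].
    by congr pair; apply/to_ret_eq.
  + case=> E1 E2; have e1 := proj1 (@cls_eq R x1 y1) E1; have e2 := proj1 (@cls_eq R x2 y2) E2; apply: (proj2 (@to_ret_eq (induced R) (x1, x2) (y1, y2))) => -[z1 z2]; by rewrite !sig_ind e1 e2.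
Qed.

Lemma ret_chain (S : sol) : nd_inv_sol S -> forall l,
  iso (iter l ret (induced S)) (induced (iter l ret S)).
Proof.
move=> H; elim=> [|l IH] /=; first exact: iso_refl.
apply: iso_trans (ret_prod (iter_ret_nd l H)).
apply: ret_iso IH; apply: induced_nd; exact: iter_ret_nd.
Qed.

Lemma ret_card (S : sol) : nd_inv_sol S -> forall l,
  #|carrier (iter l ret (induced S))| = #|carrier (iter l ret S)| ^ 2.
Proof. by move=> H l; rewrite (iso_card (ret_chain H l)) card_induced. Qed.

Lemma Dmap_ind (S : sol) : nd_inv_sol S -> forall x y,
  Dmap (induced S) ((x, y) : carrier (induced S)) = (Dmap S x, Dmap S y).
Proof.
move=> H x y; have [_ ns _] := induced_nd H; have [_ ns1 _] := H.
rewrite /Dmap -/(inv_of _ _) -/(inv_of _ x) -/(inv_of _ y).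
apply: (bij_inj (ns (x, y)).1); rewrite inv_ofK; last by case: (ns (x, y)).
by rewrite sig_ind !inv_ofK //; [case: (ns1 y) | case: (ns1 x)].
Qed.

Lemma iterD_ind (S : sol) : nd_inv_sol S -> forall i x y,
  iter i (Dmap (induced S)) ((x, y) : carrier (induced S)) = (iter i (Dmap S) x, iter i (Dmap S) y).
Proof. by move=> H; elim=> //= i IH x y; rewrite IH Dmap_ind. Qed.

Lemma chain_ind (S : sol) : nd_inv_sol S -> forall x y m a b,
  sig_chain (induced S) ((x, y) : carrier (induced S)) m (a, b) =
  (sig_chain S x m a, sig_chain S y m b).
Proof.
move=> H x y m; rewrite /sig_chain; elim: (iota 0 m) => //= i s IH a b.
by rewrite IH iterD_ind.
Qed.

Lemma class_eq_ind (S : sol) m : nd_inv_sol S -> (class_eq S m <-> class_eq (induced S) m).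
Proof.
move=> H; split.
- by move=> C [x y] [a b]; rewrite (chain_ind H) !C.
- by move=> C x a; have := C (x, x) (a, a); rewrite (chain_ind H) => -[].
Qed.

Lemma restrict_nd (T : sol) (Y : {set carrier T}) :
  nd_inv_sol T -> Defs.invariant T Y -> nd_inv_sol (restrict T Y).
Proof.
move=> H iY.
apply: (@hom_inj_nd (restrict T Y) T (fun a => val a)) H; first exact: val_inj.
move=> a b; case: (iY (val a) (val b) (valP a) (valP b)) => i1 i2; split.
- by rewrite /sig_ /= insubdK.
- by rewrite /gam /= insubdK.
Qed.

Lemma decomp_ind (S : sol) : nd_inv_sol S -> decomposable S -> decomposable (induced S).
Proof.
move=> H [Y [Z [nY nZ dis un [[iY _] [iZ _]]]]].
have iP : forall W : {set carrier S}, Defs.invariant S W ->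
    Defs.invariant (induced S) [set p : carrier (induced S) | p.1 \in W].
  move=> W iW [x1 x2] [y1 y2]; rewrite !inE /= => h1 h2.
  by case: (iW x1 y1 h1 h2).
exists [set p : carrier (induced S) | p.1 \in Y], [set p : carrier (induced S) | p.1 \in Z].
split.
- case/set0Pn: nY => y yY; apply/set0Pn; exists (y, y); by rewrite inE.
- case/set0Pn: nZ => y yY; apply/set0Pn; exists (y, y); by rewrite inE.
- rewrite -setI_eq0; apply/eqP/setP => p; rewrite !inE.
  move: dis; rewrite -setI_eq0 => /eqP/setP/(_ p.1); by rewrite !inE.
- apply/setP => p; rewrite !inE; move/setP: un => /(_ p.1); by rewrite !inE.
- split; split; try exact: iP.
  + apply: restrict_nd; [exact: induced_nd | exact: iP].
  + apply: restrict_nd; [exact: induced_nd | exact: iP].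
Qed.

Lemma closed_part (T : sol) (Y Z : {set carrier T}) : nondeg T -> Defs.invariant T Y ->
  Defs.invariant T Z -> [disjoint Y & Z] -> Y :|: Z = setT ->
  forall x y, y \in Y -> sig_ T x y \in Y.
Proof.
move=> nd iY iZ dis un x y yY.
have : x \in Y :|: Z by rewrite un inE.
rewrite inE => /orP [xY | xZ]; first by case: (iY x y xY yY).
have inj := bij_inj (nd x).1.
have sub : [set sig_ T x z | z in Z] \subset Z.
  apply/subsetP => w /imsetP [z zZ ->]; by case: (iZ x z xZ zZ).
have eqZ : [set sig_ T x z | z in Z] = Z.
  apply/eqP; rewrite eqEcard sub /= card_imset //.
have : sig_ T x y \in Y :|: Z by rewrite un inE.
rewrite inE => /orP [//|]; rewrite -{1}eqZ => /imsetP [z zZ /inj e].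
move: dis; rewrite -setI_eq0 => /eqP/setP/(_ y); by rewrite !inE yY e zZ.
Qed.

Lemma word_in (T : sol) (Y : {set carrier T}) :
  (forall x y, y \in Y -> sig_ T x y \in Y) ->
  forall e ids, e \in Y -> foldr (fun i y => sig_ T i y) e ids \in Y.
Proof. by move=> cl e; elim=> //= i s IH eY; apply: cl; apply: IH. Qed.

Lemma condC_indec (T : sol) e : nd_inv_sol T -> condC T e -> indecomposable T.
Proof.
move=> [_ nd _] [l Hl] [Y [Z [nY nZ dis un [[iY _] [iZ _]]]]].
have cY := closed_part nd iY iZ dis un.
have cZ : forall x y, y \in Z -> sig_ T x y \in Z.
  apply: (closed_part nd iZ iY); by rewrite 1?disjoint_sym // setUC.
have nodis : forall w, w \in Y -> w \in Z -> False.
  move=> w wY wZ; move: dis; rewrite -setI_eq0 => /eqP/setP/(_ w); by rewrite !inE wY wZ.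
have : e \in Y :|: Z by rewrite un inE.
rewrite inE => /orP [eY | eZ].
- case/set0Pn: nZ => z zZ; case: (Hl z) => ids [_ ez].
  apply: (nodis z) => //; rewrite -ez; exact: word_in.
- case/set0Pn: nY => z zY; case: (Hl z) => ids [_ ez].
  apply: (nodis z) => //; rewrite -ez; exact: word_in.
Qed.

Lemma foldr_zip (S : sol) (e1 e2 : carrier S) (s1 s2 : seq (carrier S)) :
  size s1 = size s2 ->
  foldr (fun i y => sig_ (induced S) i y) ((e1, e2) : carrier (induced S)) (zip s1 s2) =
  (foldr (fun i y => sig_ S i y) e1 s1, foldr (fun i y => sig_ S i y) e2 s2).
Proof.
elim: s1 s2 => [|a s1 IH] [|b s2] //= [] /IH ->; by rewrite sig_ind.
Qed.

Lemma condC_ind (S : sol) e : condC S e -> condC (induced S) ((e, e) : carrier (induced S)).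
Proof.
move=> [l Hl]; exists l => -[s1 s2].
case: (Hl s1) => a [sa ea]; case: (Hl s2) => b [sb eb].
exists (zip a b); split; first by rewrite size_zip sa sb minnn.
by rewrite foldr_zip ?sa ?sb // ea eb.
Qed.

Lemma condC_iter (S : sol) e : condC S e -> forall k, exists e', condC (iter k induced S) e'.
Proof.
move=> H; elim=> [|k [e' IH]] /=; first by exists e.
by exists (e', e'); apply: condC_ind.
Qed.

Lemma card_iter (S : sol) k : #|carrier (iter k induced S)| = #|carrier S| ^ (2 ^ k).
Proof.
elim: k => [|k IH] /=; first by rewrite expn1.
by rewrite card_induced IH -expnM expnS mulnC.
Qed.

Lemma sq_eq1 m : m ^ 2 = 1 <-> m = 1.
Proof.
split; last by move=> ->.
by move/eqP; rewrite expnS expn1 muln_eq1 => /andP [/eqP].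
Qed.
Unset Implicit Arguments.

Theorem theorem3p12 (n : nat) (r : 'I_n * 'I_n -> 'I_n * 'I_n) :
  nd_inv_sol (sol_of n r) ->
  (forall k, 0 < k ->
     nd_inv_sol (iter k induced (sol_of n r)) /\
     #|carrier (iter k induced (sol_of n r))| = n ^ (2 ^ k)) /\
  (irretractable (sol_of n r) -> irretractable (induced (sol_of n r))) /\
  (forall l, mp_level (sol_of n r) l -> mp_level (induced (sol_of n r)) l) /\
  (decomposable (sol_of n r) -> decomposable (induced (sol_of n r))) /\
  (forall m, is_class (sol_of n r) m -> is_class (induced (sol_of n r)) m) /\
  (forall h : 0 < n,
     indecomposable (sol_of n r) -> condC (sol_of n r) (Ordinal h) ->
     [/\ indecomposable (induced (sol_of n r)),
         condC (induced (sol_of n r))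
           ((Ordinal h, Ordinal h) : carrier (induced (sol_of n r)))
       & forall k, 0 < k -> indecomposable (iter k induced (sol_of n r))]).
Proof.
move=> H; set S := sol_of n r.
split.
  move=> k _; split; first exact: iter_induced_nd.
  by rewrite card_iter /S /= card_ord.
split.
  move=> Hi l; rewrite (ret_card H) => /sq_eq1; exact: Hi.
split.
  move=> l [e1 e2]; split; first by rewrite (ret_card H) e1.
  by move=> l' lt; rewrite (ret_card H) => /sq_eq1; apply: e2.
split; first exact: decomp_ind.
split.
  move=> m [m0 C N]; split => //; first by apply/(class_eq_ind m H).
  by move=> m' h1 h2 /(class_eq_ind m' H); apply: N.
move=> h _ Cc.
have Ci := condC_ind Cc.
split.
- apply: condC_indec Ci; exact: induced_nd.
- exact: Ci.
- move=> k _; case: (condC_iter Cc k) => e' Ce.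
  apply: condC_indec Ce; exact: iter_induced_nd.
Qed.
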